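(* Let $\mathcal{R}_i$ be a rule stratum of a stratifiable Datalog program and let $t \ge 0$. Assume every rule $r \in \mathcal{R}_i$ has arity $|\mathcal{X}(r)| \ge 2$ and every literal in its body $\mathrm{B}(r)$ has arity at most $2$. Fix a total order $\mathit{rank}$ on edges. For each $r \in \mathcal{R}_i$, with $k = |\mathcal{X}(r)|$, enumerate all $k$-cliques of the substitution consistency graph $\mathcal{G}(r, J_i^t)$ that are seeded at (i.e., contain) some edge $e \in \Delta\mathcal{E}_{i,r}^t$, and report such a clique $\mathcal{C}$ (from seed $e$) only if its owner $\omega(\mathcal{C})$ equals $e$. Let $H_i^t$ be the set of heads $\mathrm{H}(r[\rho])$ of the ground rules corresponding to the reported cliques $\{x/\rho(x) \mid x \in \mathcal{X}(r)\}$. Then $$H_i^t = \{\mathrm{H}(\bar r) \mid \bar r \in \mathrm{gr}(\mathcal{R}_i, J_i^t),\ \mathrm{B}(\bar r) \cap \Delta_i^t \neq \emptyset\},$$ and consequently $\Delta_i^{t+1} = H_i^t \setminus J_i^t$.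
   Context: A Datalog program is a pair $\langle \mathcal{F}, \mathcal{R}\rangle$ of a set $\mathcal{F}$ of facts (ground atoms over predicates with fixed arities) and a set $\mathcal{R}$ of rules $h \leftarrow b_1,\ldots,b_k$ with head atom $h=\mathrm{H}(r)$ and body literals $\mathrm{B}(r)=\{b_1,\ldots,b_k\}$ (atoms or negated atoms, whose arguments are variables or object constants). $\mathcal{X}(y)$ denotes the set of variables occurring in $y$, and the arity of $y$ is $|\mathcal{X}(y)|$; $\mathcal{O}$ is the set of objects. For a substitution $\rho$ (a map from variables to objects), $y[\rho]$ replaces each variable $x$ by $\rho(x)$. A ground rule is applicable in a fact set $J$ if every positive body atom is in $J$ and every negated body atom is not in $J$; $\mathrm{gr}(\mathcal{R}', J)$ is the set of ground instances of rules in $\mathcal{R}'$ applicable in $J$. A program is stratifiable if its predicates can be partitioned into strata $\mathcal{P}_1,\ldots,\mathcal{P}_\ell$ such that if $P$ occurs positively (resp. negatively) in the body of a rule whose head predicate is $P'$, with $P\in\mathcal{P}_a$, $P'\in\mathcal{P}_b$, then $a\le b$ (resp. $a<b$); rule stratum $\mathcal{R}_i$ consists of the rules whose head predicate is in $\mathcal{P}_i$. With $\mathcal{F}_0=\mathcal{F}$, semi-naive evaluation of stratum $i$ sets $J_i^0 = \Delta_i^0 = \mathcal{F}_{i-1}$, and for $t \ge 0$: $\Delta_i^{t+1} = \{\mathrm{H}(\bar r) \mid \bar r \in \mathrm{gr}(\mathcal{R}_i, J_i^t),\ \mathrm{B}(\bar r)\cap \Delta_i^t \neq \emptyset\} \setminus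 J_i^t$ and $J_i^{t+1} = J_i^t \cup \Delta_i^{t+1}$; it stops when $\Delta_i^t=\emptyset$, giving $\mathcal{F}_i = J_i^t$. Substitution consistency graph $\mathcal{G}(r,J)$ of a rule $r$ in a fact set $J$: vertex set $\{x/o \mid x \in \mathcal{X}(r), o \in \mathcal{O}\}$; the edges are all pairs $\{v,v'\}$ of vertices except those in $\mathcal{I}^{\neq}\cup\mathcal{I}^+\cup\mathcal{I}^-$, where $\mathcal{I}^{\neq}$ is the set of pairs $\{x/o_1, x/o_2\}$ with $o_1\neq o_2$; $\mathcal{I}^+$ is the set of pairs $\{v,v'\}$ such that some positive body atom $p$ of $r$, after applying the partial substitution $\{v,v'\}$, matches no atom of $J$; and $\mathcal{I}^-$ is the set of pairs $\{v,v'\}$ such that for some negated body atom $p$ of $r$, $p[v,v'] \in J$. An atom $P(x_1,\ldots,x_n)$ matches $P'(x_1',\ldots,x_n')$ iff $P=P'$ and for every $i$, $x_i$ or $x_i'$ is a variable or else $x_i = x_i'$. $\Delta$-edges: $\Delta\mathcal{E}_{i,r}^t = \mathcal{E}(\mathcal{G}(r, J_i^t)) \setminus \mathcal{E}(\mathcal{G}(r, J_i^{t-1}))$, with the convention $J_i^{-1} = \emptyset$. Owner: for a $k$-clique $\mathcal{C}$ ($k\ge2$) containing at least one edge of $\Delta\mathcal{E}_{i,r}^t$, $\omega(\mathcal{C})$ is the edge of $\Delta\mathcal{E}_{i,r}^t$ with both endpoints in $\mathcal{C}$ of minimum $\mathit{rank}$. *)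

(* Defs.v *)
From HB Require Import structures.
From mathcomp Require Import all_boot finmap.
Set Implicit Arguments. Unset Strict Implicit. Unset Printing Implicit Defensive.
Local Open Scope fset_scope.

Section Datalog.
Variables (Pred : eqType) (Var Obj : choiceType).

(* terms: inl x = variable x, inr o = object constant o *)
Definition term := (Var + Obj)%type.
Definition atom := (Pred * seq term)%type.
Definition fact := (Pred * seq Obj)%type.
(* literal: (true, a) = a, (false, a) = not a *)
Definition literal := (bool * atom)%type.
Definition rule := (atom * seq literal)%type.
Definition head (r : rule) : atom := r.1.
Definition body (r : rule) : seq literal := r.2.
Definition program := (seq fact * seq rule)%type.
Definition factset := fact -> Prop.

Definition wf_program (ar : Pred -> nat) (P : program) : Prop :=
  (forall f, f \in P.1 -> size f.2 = ar f.1) /\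
  (forall r, r \in P.2 -> size (head r).2 = ar (head r).1 /\
     forall l, l \in body r -> size l.2.2 = ar l.2.1).

Definition is_var (u : term) : bool := if u is inl _ then true else false.
Definition term_vars (u : term) : seq Var := if u is inl x then [:: x] else [::].
Definition atom_vars (a : atom) : seq Var := undup (flatten (map term_vars a.2)).
Definition atom_arity (a : atom) : nat := size (atom_vars a).
Definition rule_vars (r : rule) : seq Var :=
  undup (atom_vars (head r) ++ flatten (map (fun l : literal => atom_vars l.2) (body r))).
Definition rule_arity (r : rule) : nat := size (rule_vars r).

Definition subst := Var -> Obj.
Definition gterm (rho : subst) (u : term) : Obj :=
  match u with inl x => rho x | inr o => o end.
Definition gatom (rho : subst) (a : atom) : fact := (a.1, map (gterm rho) a.2).

Definition applicable (J : factset) (r : rule) (rho : subst) : Prop :=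
  forall l, l \in body r -> if l.1 then J (gatom rho l.2) else ~ J (gatom rho l.2).

Definition body_hits (D : factset) (r : rule) (rho : subst) : Prop :=
  exists a, (true, a) \in body r /\ D (gatom rho a).

Definition trig (Rs : seq rule) (J D : factset) : factset := fun f =>
  exists2 r, r \in Rs & exists rho, [/\ applicable J r rho, body_hits D r rho &
                                       f = gatom rho (head r)].

(* semi-naive evaluation: returns (J^t, Delta^t) *)
Fixpoint semi (Rs : seq rule) (F0 : factset) (t : nat) : factset * factset :=
  match t with
  | 0 => (F0, F0)
  | t'.+1 =>
      let JD := semi Rs F0 t' in
      let D' := fun f => trig Rs JD.1 JD.2 f /\ ~ JD.1 f in
      ((fun f => JD.1 f \/ D' f), D')
  end.

Definition stratification (P : program) (strat : Pred -> nat) (l : nat) : Prop :=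
  (forall p, 1 <= strat p <= l) /\
  (forall r, r \in P.2 -> forall lit, lit \in body r ->
     if lit.1 then strat lit.2.1 <= strat (head r).1
     else strat lit.2.1 < strat (head r).1).

Definition rule_stratum (P : program) (strat : Pred -> nat) (i : nat) : seq rule :=
  [seq r <- P.2 | strat (head r).1 == i].

(* F_0 = F, F_i = result of semi-naive evaluation of stratum i
   (the union of all J_i^t, i.e. J_i^t for the t at which Delta_i^t is empty) *)
Fixpoint Fstrat (P : program) (strat : Pred -> nat) (i : nat) : factset :=
  match i with
  | 0 => fun f => f \in P.1
  | i'.+1 => fun f => exists t,
      (semi (rule_stratum P strat i'.+1) (Fstrat P strat i') t).1 f
  end.

Definition Jst P strat i t : factset :=
  (semi (rule_stratum P strat i) (Fstrat P strat i.-1) t).1.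
Definition Dst P strat i t : factset :=
  (semi (rule_stratum P strat i) (Fstrat P strat i.-1) t).2.
(* J_i^{t-1}, with J_i^{-1} = empty *)
Definition Jprev P strat i t : factset :=
  match t with 0 => fun _ => False | t'.+1 => Jst P strat i t' end.

Definition vertex := (Var * Obj)%type.
Definition psubst (v v' : vertex) (u : term) : term :=
  match u with
  | inl x => if x == v.1 then inr v.2 else if x == v'.1 then inr v'.2 else u
  | inr _ => u
  end.
Definition patom (v v' : vertex) (a : atom) : atom := (a.1, map (psubst v v') a.2).
Definition lift_fact (f : fact) : atom := (f.1, map (@inr Var Obj) f.2).
Definition matches (a b : atom) : bool :=
  (a.1 == b.1) && all2 (fun u w => [|| is_var u, is_var w | u == w]) a.2 b.2.

Definition is_vertex (r : rule) (v : vertex) : bool := v.1 \in rule_vars r.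
Definition I_neq (v v' : vertex) : bool := (v.1 == v'.1) && (v.2 != v'.2).
Definition I_plus (r : rule) (J : factset) (v v' : vertex) : Prop :=
  exists a, (true, a) \in body r /\
    forall f, J f -> ~~ matches (patom v v' a) (lift_fact f).
Definition I_minus (r : rule) (J : factset) (v v' : vertex) : Prop :=
  exists a, (false, a) \in body r /\
    exists f, J f /\ patom v v' a = lift_fact f.

Definition sc_edge (r : rule) (J : factset) (e : {fset vertex}) : Prop :=
  exists v v', [/\ v != v', e = [fset v; v'], is_vertex r v & is_vertex r v'] /\
                [/\ ~~ I_neq v v', ~ I_plus r J v v' & ~ I_minus r J v v'].

Definition delta_edge (r : rule) (J Jp : factset) (e : {fset vertex}) : Prop :=
  sc_edge r J e /\ ~ sc_edge r Jp e.

Definition clique (r : rule) (J : factset) (k : nat) (C : {fset vertex}) : Prop :=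
  [/\ #|` C| = k, (forall v, v \in C -> is_vertex r v) &
      forall v v', v \in C -> v' \in C -> v != v' -> sc_edge r J [fset v; v']].

Definition owner_is (rank : {fset vertex} -> {fset vertex} -> Prop)
  (r : rule) (J Jp : factset) (C e : {fset vertex}) : Prop :=
  [/\ delta_edge r J Jp e, e `<=` C &
      forall e', delta_edge r J Jp e' -> e' `<=` C -> e' <> e -> rank e e'].

Definition reported rank (r : rule) (J Jp : factset) (C : {fset vertex}) : Prop :=
  clique r J (rule_arity r) C /\
  exists e, [/\ delta_edge r J Jp e, e `<=` C & owner_is rank r J Jp C e].

Definition rho_clique (r : rule) (rho : subst) : {fset vertex} :=
  seq_fset tt (map (fun x => (x, rho x)) (rule_vars r)).

Definition Hset rank (P : program) strat i t : factset := fun f =>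
  exists2 r, r \in rule_stratum P strat i & exists rho,
    reported rank r (Jst P strat i t) (Jprev P strat i t) (rho_clique r rho) /\
    f = gatom rho (head r).

Definition strict_total (T : Type) (lt : T -> T -> Prop) : Prop :=
  [/\ forall a, ~ lt a a, forall a b c, lt a b -> lt b c -> lt a c &
      forall a b, a <> b -> lt a b \/ lt b a].

End Datalog.

(* Main.v *)
Require Import Defs.
From HB Require Import structures.
From mathcomp Require Import all_boot finmap.
From Stdlib Require Import Classical.
Set Implicit Arguments. Unset Strict Implicit. Unset Printing Implicit Defensive.
Local Open Scope fset_scope.


Lemma atom_varsE (Pred : eqType) (Var Obj : choiceType) (a : atom Pred Var Obj) z :
  (z \in atom_vars a) = (inl z \in a.2).
Proof.
case: a => p s; rewrite /atom_vars /= mem_undup; elim: s => [|u s IH] //=.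
rewrite mem_cat IH in_cons; case: u => [x|o] //=; by rewrite inE.
Qed.

Lemma psubst_ground (Var Obj : choiceType) (rho : subst Var Obj) (v v' : vertex Var Obj) u o :
  v.2 = rho v.1 -> v'.2 = rho v'.1 -> psubst v v' u = inr o -> gterm rho u = o.
Proof.
move=> hv hv'; case: u => [x|o'] /=; last by case.
case: eqP => [->|_]; first by case=> <-.
by case: eqP => [->|_] //; case=> <-.
Qed.

Lemma patom_lift (Pred : eqType) (Var Obj : choiceType) (rho : subst Var Obj)
  (v v' : vertex Var Obj) (a : atom Pred Var Obj) f :
  v.2 = rho v.1 -> v'.2 = rho v'.1 -> patom v v' a = lift_fact Var f -> f = gatom rho a.
Proof.
move=> hv hv'; case: a f => p s [q os]; rewrite /patom /lift_fact /gatom /=.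
case=> -> e; congr pair; elim: s os e => [|u s IH] [|o os] //= [e1 e2].
by rewrite (IH _ e2) (psubst_ground hv hv' e1).
Qed.

Lemma patom_ground (Pred : eqType) (Var Obj : choiceType) (rho : subst Var Obj)
  (v v' : vertex Var Obj) (a : atom Pred Var Obj) :
  v.2 = rho v.1 -> v'.2 = rho v'.1 ->
  (forall z, z \in atom_vars a -> z = v.1 \/ z = v'.1) ->
  patom v v' a = lift_fact Var (gatom rho a).
Proof.
move=> hv hv'; case: a => p s /= H; rewrite /patom /lift_fact /gatom /=; congr pair.
rewrite -map_comp; apply/eq_in_map => -[x|o] hx //=.
have := H x; rewrite atom_varsE => /(_ hx) [->|->]; first by rewrite eqxx hv.
by case: eqP => [->|_]; rewrite ?eqxx ?hv ?hv'.
Qed.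

Lemma matches_any (Pred : eqType) (Var Obj : choiceType) (rho : subst Var Obj)
  (v v' : vertex Var Obj) (a : atom Pred Var Obj) :
  v.2 = rho v.1 -> v'.2 = rho v'.1 ->
  matches (patom v v' a) (lift_fact Var (gatom rho a)).
Proof.
move=> hv hv'; case: a => p s; rewrite /matches /= eqxx /=.
elim: s => [|u s IH] //=; rewrite IH andbT.
case: u => [x|o] /=; last by rewrite eqxx ?orbT.
case: eqP => [->|_]; first by rewrite hv eqxx ?orbT.
by case: eqP => [->|_] //; rewrite hv' eqxx ?orbT.
Qed.

Lemma matches_ground (Pred : eqType) (Var Obj : choiceType) (g f : fact Pred Obj) :
  matches (lift_fact Var g) (lift_fact Var f) -> f = g.
Proof.
case: g f => p s [q os]; rewrite /matches /= => /andP [/eqP -> H]; congr pair.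
elim: s os H => [|u s IH] [|o os] //= /andP [/eqP [->] /IH ->] //.
Qed.

Lemma mem_rho_clique (Pred : eqType) (Var Obj : choiceType) (r : rule Pred Var Obj) rho w :
  (w \in rho_clique r rho) = (w.1 \in rule_vars r) && (w.2 == rho w.1).
Proof.
rewrite /rho_clique seq_fsetE; apply/mapP/andP => [[x hx ->]|[h /eqP e]] //=.
by exists w.1 => //; case: w e {h} => ? ? /= ->.
Qed.

Lemma card_rho_clique (Pred : eqType) (Var Obj : choiceType) (r : rule Pred Var Obj) rho :
  #|` rho_clique r rho| = rule_arity r.
Proof.
rewrite /rho_clique size_seq_fset undup_id ?size_map //.
by rewrite map_inj_uniq ?undup_uniq // => x y [].
Qed.

Lemma body_vars (Pred : eqType) (Var Obj : choiceType) (r : rule Pred Var Obj) b a :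
  (b, a) \in body r -> {subset atom_vars a <= rule_vars r}.
Proof.
move=> hb z hz; rewrite /rule_vars mem_undup mem_cat; apply/orP; right.
by apply/flatten_mapP; exists (b, a).
Qed.

Lemma var_cover (Pred : eqType) (Var Obj : choiceType) (r : rule Pred Var Obj) (a : atom Pred Var Obj) :
  2 <= rule_arity r -> atom_arity a <= 2 -> {subset atom_vars a <= rule_vars r} ->
  exists x y, [/\ x != y, x \in rule_vars r, y \in rule_vars r &
     forall z, z \in atom_vars a -> z = x \/ z = y].
Proof.
rewrite /rule_arity /atom_arity => H2 Ha Hs.
have uR : uniq (rule_vars r) by rewrite undup_uniq.
have uA : uniq (atom_vars a) by rewrite undup_uniq.
move: H2 uR Ha uA Hs.
case: (rule_vars r) => [|p [|q rs]] //= _ /andP [hpq _].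
case: (atom_vars a) => [|z [|w [|? ?]]] //= _.
- move=> _ _; exists p, q; split => //; first by apply: contra hpq => /eqP ->; rewrite inE eqxx.
  + by rewrite inE eqxx.
  + by rewrite !inE eqxx orbT.
- move=> _ Hs; have hz := Hs z (mem_head _ _).
  case: (eqVneq z p) => [->|hzp].
  + exists p, q; split => //; first by apply: contra hpq => /eqP ->; rewrite inE eqxx.
    * by rewrite inE eqxx.
    * by rewrite !inE eqxx orbT.
    * by move=> z'; rewrite inE => /eqP ->; left.
  + exists z, p; split => //; first by rewrite inE eqxx.
    by move=> z'; rewrite inE => /eqP ->; left.
- rewrite inE andbT => hzw Hs.
  exists z, w; split => //; first exact: Hs (mem_head _ _).
  + by apply: Hs; rewrite !inE eqxx orbT.
  + by move=> z'; rewrite !inE => /orP [/eqP ->|/eqP ->]; [left|right].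
Qed.

Lemma pair_mem (T : choiceType) (v v' w w' : T) :
  [fset v; v'] = [fset w; w'] -> v = w \/ v = w'.
Proof.
move=> e; have := fset21 v v'; rewrite e in_fset2 => /orP [/eqP ->|/eqP ->]; by [left|right].
Qed.

Lemma pair_mem2 (T : choiceType) (v v' w w' : T) :
  [fset v; v'] = [fset w; w'] -> v' = w \/ v' = w'.
Proof.
move=> e; have := fset22 v v'; rewrite e in_fset2 => /orP [/eqP ->|/eqP ->]; by [left|right].
Qed.

Lemma pair_cover (Var Obj : choiceType) (v v' w w' : vertex Var Obj) (z : Var) :
  [fset v; v'] = [fset w; w'] -> z = v.1 \/ z = v'.1 -> z = w.1 \/ z = w'.1.
Proof.
move=> e; have [->|->] := pair_mem e; have [->|->] := pair_mem2 e; tauto.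
Qed.

Lemma inC_pair (Pred : eqType) (Var Obj : choiceType) (r : rule Pred Var Obj) rho (v v' w w' : vertex Var Obj) :
  v \in rho_clique r rho -> v' \in rho_clique r rho -> [fset v; v'] = [fset w; w'] ->
  w \in rho_clique r rho.
Proof.
move=> hv hv' e; have := fset21 w w'; rewrite -e in_fset2 => /orP [/eqP ->|/eqP ->] //.
Qed.

Lemma inC_val (Pred : eqType) (Var Obj : choiceType) (r : rule Pred Var Obj) rho (w : vertex Var Obj) :
  w \in rho_clique r rho -> w.2 = rho w.1.
Proof. by rewrite mem_rho_clique => /andP [_ /eqP]. Qed.

Lemma clique_of_app (Pred : eqType) (Var Obj : choiceType) (r : rule Pred Var Obj) J rho :
  applicable J r rho -> clique r J (rule_arity r) (rho_clique r rho).
Proof.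
move=> app; split; first exact: card_rho_clique.
  by move=> v; rewrite mem_rho_clique /is_vertex => /andP [].
move=> v v' hv hv' hne; exists v, v'; split; first split => //.
- by move: hv; rewrite mem_rho_clique /is_vertex => /andP [].
- by move: hv'; rewrite mem_rho_clique /is_vertex => /andP [].
- split.
  + rewrite /I_neq; apply/negP => /andP [/eqP e1 /negP ne]; apply: ne.
    by rewrite (inC_val hv) (inC_val hv') e1.
  + move=> [a [ha Hf]]; have := Hf _ (app _ ha).
    by rewrite (matches_any _ (inC_val hv) (inC_val hv')).
  + move=> [a [ha [f [Jf e]]]]; have := app _ ha; rewrite /=.
    by rewrite -(patom_lift (inC_val hv) (inC_val hv') e).
Qed.

Lemma app_of_clique (Pred : eqType) (Var Obj : choiceType) (r : rule Pred Var Obj) J rho :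
  2 <= rule_arity r -> (forall lit, lit \in body r -> atom_arity lit.2 <= 2) ->
  (forall v v', v \in rho_clique r rho -> v' \in rho_clique r rho -> v != v' ->
     sc_edge r J [fset v; v']) -> applicable J r rho.
Proof.
move=> H2 Har Hc [b a] hl.
have [x [y [hxy hx hy Hxy]]] := var_cover H2 (Har _ hl) (body_vars hl).
have hv : (x, rho x) \in rho_clique r rho by rewrite mem_rho_clique hx eqxx.
have hv' : (y, rho y) \in rho_clique r rho by rewrite mem_rho_clique hy eqxx.
have hne : (x, rho x) != (y, rho y) by apply: contra hxy => /eqP [->].
have [w [w' [[_ e _ _] [_ nP nM]]]] := Hc _ _ hv hv' hne.
have hw := inC_pair hv hv' e.
have hw' := inC_pair hv hv' (etrans e (fsetUC _ _)).
have cov : forall z, z \in atom_vars a -> z = w.1 \/ z = w'.1.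
  by move=> z hz; apply: (pair_cover e); exact: Hxy.
have gr := patom_ground (inC_val hw) (inC_val hw') cov.
clear Hxy; case: b hl => hl /=.
- apply: NNPP => nJ; apply: nP; exists a; split => // f Jf; apply/negP.
  by rewrite gr => /matches_ground ef; apply: nJ; rewrite -ef.
- move=> Jg; apply: nM; exists a; split => //; exists (gatom rho a); split => //.
Qed.

Lemma min_exists (T : eqType) (rank : T -> T -> Prop) (Q : T -> Prop) (s : seq T) :
  strict_total rank -> (exists e, e \in s /\ Q e) ->
  exists m, [/\ m \in s, Q m & forall e', e' \in s -> Q e' -> e' <> m -> rank m e'].
Proof.
move=> [irr tr tot]; elim: s => [|h s IH] [e [he Qe]] //.
have [[e1 [he1 Qe1]]|nex] := classic (exists e, e \in s /\ Q e).
- have [m [hm Qm Hm]] := IH (ex_intro _ e1 (conj he1 Qe1)).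
  have [Qh|nQh] := classic (Q h).
  + have [ehm|nhm] := classic (h = m).
      exists m; split; rewrite ?inE ?hm ?orbT // => e' /orP [/eqP -> _|]; first by move=> /(_ ehm).
      exact: Hm.
    have [rhm|rmh] := tot _ _ nhm.
    * exists h; split; rewrite ?inE ?eqxx // => e' /orP [/eqP -> _ []//|he' Qe' ne'].
      have [->|nem] := classic (e' = m) => //.
      exact: tr rhm (Hm _ he' Qe' nem).
    * exists m; split; rewrite ?inE ?hm ?orbT // => e' /orP [/eqP -> //|]; exact: Hm.
  + exists m; split; rewrite ?inE ?hm ?orbT // => e' /orP [/eqP -> //|]; exact: Hm.
- have Qh : Q h.
    move: he; rewrite inE => /orP [/eqP <- //|he]; exfalso; apply: nex; by exists e.
  exists h; split; rewrite ?inE ?eqxx // => e' /orP [/eqP -> _ []//|he' Qe'].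
  exfalso; apply: nex; by exists e'.
Qed.

Lemma min_sub (T : choiceType) (rank : {fset T} -> {fset T} -> Prop) (Q : {fset T} -> Prop) (C : {fset T}) :
  strict_total rank -> (exists e, e `<=` C /\ Q e) ->
  exists m, [/\ m `<=` C, Q m & forall e', e' `<=` C -> Q e' -> e' <> m -> rank m e'].
Proof.
move=> st [e [he Qe]].
have [|m [hm Qm Hm]] := @min_exists _ rank Q (fpowerset C) st.
  by exists e; rewrite fpowersetE.
exists m; split; rewrite -?fpowersetE //.
by move=> e' he'; apply: Hm; rewrite fpowersetE.
Qed.

Lemma delta_hits (Pred : eqType) (Var Obj : choiceType) (r : rule Pred Var Obj) (J Jp D : factset Pred Obj) rho e :
  (forall f, Jp f -> J f) -> (forall f, J f -> ~ Jp f -> D f) ->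
  applicable J r rho -> delta_edge r J Jp e -> e `<=` rho_clique r rho -> body_hits D r rho.
Proof.
move=> HJ HD app [[v [v' [[hne ee hiv hiv'] [nI _ _]]]] nE] sub.
have hv : v \in rho_clique r rho by apply: (fsubsetP sub); rewrite ee fset21.
have hv' : v' \in rho_clique r rho by apply: (fsubsetP sub); rewrite ee fset22.
have : I_plus r Jp v v' \/ I_minus r Jp v v'.
  apply: NNPP => nn; apply: nE; exists v, v'; split => //; split => //; tauto.
case => [[a [ha Hf]]|[a [ha [f [Jf ef]]]]].
- exists a; split => //; apply: HD; first exact: app _ ha.
  move=> Jg; have := Hf _ Jg; by rewrite (matches_any _ (inC_val hv) (inC_val hv')).
- exfalso; have := app _ ha; rewrite /= -(patom_lift (inC_val hv) (inC_val hv') ef).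
  by move/(_ (HJ _ Jf)).
Qed.

Lemma hits_delta (Pred : eqType) (Var Obj : choiceType) (r : rule Pred Var Obj) (J Jp D : factset Pred Obj) rho :
  (forall f, D f -> ~ Jp f) ->
  2 <= rule_arity r -> (forall lit, lit \in body r -> atom_arity lit.2 <= 2) ->
  applicable J r rho -> body_hits D r rho ->
  exists e, delta_edge r J Jp e /\ e `<=` rho_clique r rho.
Proof.
move=> HD H2 Har app [a [hl Da]].
have [x [y [hxy hx hy Hxy]]] := var_cover H2 (Har _ hl) (body_vars hl).
have hv : (x, rho x) \in rho_clique r rho by rewrite mem_rho_clique hx eqxx.
have hv' : (y, rho y) \in rho_clique r rho by rewrite mem_rho_clique hy eqxx.
have hne : (x, rho x) != (y, rho y) by apply: contra hxy => /eqP [->].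
have [_ _ cl] := clique_of_app app.
exists [fset (x, rho x); (y, rho y)]; split; last first.
  by apply/fsubsetP => w; rewrite in_fset2 => /orP [/eqP ->|/eqP ->].
split; first exact: cl.
move=> [w [w' [[_ e _ _] [_ nP _]]]].
have hw := inC_pair hv hv' e.
have hw' := inC_pair hv hv' (etrans e (fsetUC _ _)).
have cov : forall z, z \in atom_vars a -> z = w.1 \/ z = w'.1.
  by move=> z hz; apply: (pair_cover e); exact: Hxy.
have gr := patom_ground (inC_val hw) (inC_val hw') cov.
apply: nP; exists a; split => // f Jf; apply/negP.
by rewrite gr => /matches_ground ef; apply: (HD _ Da); rewrite -ef.
Qed.

Lemma semi_facts (Pred : eqType) (Var Obj : choiceType) (P : program Pred Var Obj) strat i t :
  [/\ forall f, Jprev P strat i t f -> Jst P strat i t f,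
      forall f, Jst P strat i t f -> ~ Jprev P strat i t f -> Dst P strat i t f &
      forall f, Dst P strat i t f -> ~ Jprev P strat i t f].
Proof.
rewrite /Jprev /Jst /Dst; case: t => [|t] /=; split => f; tauto.
Qed.
Unset Implicit Arguments. Set Strict Implicit. Set Printing Implicit Defensive.

Theorem theorem2 (Pred : eqType) (Var Obj : choiceType) (ar : Pred -> nat)
  (P : program Pred Var Obj) (strat : Pred -> nat) (l i t : nat)
  (rank : {fset vertex Var Obj} -> {fset vertex Var Obj} -> Prop) :
  wf_program ar P ->
  stratification P strat l ->
  0 < i <= l ->
  strict_total rank ->
  (forall r, r \in rule_stratum P strat i ->
     2 <= rule_arity r /\ forall lit, lit \in body r -> atom_arity lit.2 <= 2) ->
  (forall f, Hset rank P strat i t f <->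
             trig (rule_stratum P strat i) (Jst P strat i t) (Dst P strat i t) f) /\
  (forall f, Dst P strat i t.+1 f <-> Hset rank P strat i t f /\ ~ Jst P strat i t f).
Proof.
move=> _ _ _ st Har.
have [HJ HD HD'] := semi_facts P strat i t.
have part1 : forall f, Hset rank P strat i t f <->
             trig (rule_stratum P strat i) (Jst P strat i t) (Dst P strat i t) f.
  move=> f; split.
  - move=> [r hr [rho [[[_ _ cl] [e [de se _]]] ef]]].
    have [H2 Ha] := Har r hr.
    have app := app_of_clique H2 Ha cl.
    exists r => //; exists rho; split => //.
    exact: (delta_hits HJ HD app de se).
  - move=> [r hr [rho [app bh ef]]].
    have [H2 Ha] := Har r hr.
    have [e [de se]] := hits_delta HD' H2 Ha app bh.
    have [m [sm dm Hm]] := min_sub st (ex_intro _ e (conj se de)).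
    exists r => //; exists rho; split => //; split; first exact: clique_of_app.
    by exists m; split => //; split => // e' d1 s1; apply: Hm.
split => // f; rewrite part1 /Dst /Jst /=; tauto.
Qed.
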